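(* For $n\ge 2$, let $\mathfrak{C}_n$ be the set of trees on the vertex set $\{1,\dots,n\}$ and define $$G_n(x,y,z)=\sum_{t\in\mathfrak{C}_n}x^{\deg_1(t)}y^{\deg'_2(t)}z^{|L_1(t)|}.$$ Then $G_n(x,y,z)=G_n(y,x,z)$ for all $n\ge 2$.
   Context: $\deg_k(t)$ is the degree of vertex $k$ in $t$. For a tree $t$ with vertices labeled by distinct integers and a vertex $i$, consider the path of vertices $v_0=i,v_1,\dots,v_\ell$ defined by: for each $m\ge 0$, if $v_m$ has a neighbor with label larger than $v_m$, then $v_{m+1}$ is the neighbor of $v_m$ with the smallest label among those neighbors with label larger than $v_m$; otherwise the path stops at $v_m$. Then $L_i(t)=\{v_1,\dots,v_\ell\}$, and $\deg'_2(t)$ denotes the degree in $t$ of the last vertex $v_\ell$ of this path started at $i=1$. Equivalently, $G_n(x,y,z)=n^{n-2}\mathbb{E}[x^{\mathbb{T}_1}y^{\mathbb{T}_2}z^{\mathbb{M}_1}]$ for a uniform minimal factorization $(\tau_1,\dots,\tau_{n-1})$ of $(1~2\dots n)$ (i.e. $\tau_{n-1}\circ\dots\circ\tau_1=(1~2\dots n)$), where $\mathbb{T}_k$ is the number of transpositions containing $k$ and $\mathbb{M}_1$ is the number of transpositions that move the trajectory of $1$. *)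

(* Defs.v *)
From mathcomp Require Import all_boot all_order all_algebra.
Set Implicit Arguments. Unset Strict Implicit. Unset Printing Implicit Defensive.
Import GRing.Theory.

(* Labeled trees on the vertex set {1,...,m+1}, represented by the ordinals
   'I_m.+1 = {0,...,m}; the ordinal i stands for the label i+1 (order-preserving
   relabeling). A graph is a set of edges, each edge a 2-element vertex set. *)

Section Trees.
Variable m : nat.
Local Notation V := 'I_m.+1.

Definition adj (E : {set {set V}}) : rel V := fun u v => [set u; v] \in E.

Definition is_tree (E : {set {set V}}) : bool :=
  [forall e in E, #|e| == 2] &&
  (#|E| == m) &&
  [forall u, forall v, connect (adj E) u v].

Definition deg (E : {set {set V}}) (v : V) : nat := #|[set u | adj E v u]|.

Definition next_up (E : {set {set V}}) (v : V) : option V :=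
  [pick u | [&& adj E v u, v < u &
     [forall w, (adj E v w && (v < w)) ==> (u <= w)]]].

Fixpoint upath (E : {set {set V}}) (fuel : nat) (v : V) : seq V :=
  if fuel is f.+1 then
    if next_up E v is Some u then u :: upath E f u else [::]
  else [::].

(* L_v(t); fuel m.+1 suffices since labels strictly increase *)
Definition Lpath (E : {set {set V}}) (v : V) : seq V := upath E m.+1 v.

Definition Gaux (R : comNzRingType) (x y z : R) : R :=
  \sum_(E : {set {set V}} | is_tree E)
     x ^+ deg E ord0 * y ^+ deg E (last ord0 (Lpath E ord0))
       * z ^+ size (Lpath E ord0).
End Trees.

Definition G (R : comNzRingType) (n : nat) (x y z : R) : R :=
  match n with 0 => 0 | m.+1 => Gaux m x y z end.

(* Main.v *)
Require Import Defs.
From mathcomp Require Import all_boot all_order all_algebra.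
From mathcomp Require Import zify.
Set Implicit Arguments. Unset Strict Implicit. Unset Printing Implicit Defensive.

Lemma next_up_some {m} (E : {set {set 'I_m.+1}}) v u :
  next_up E v = Some u ->
  [/\ adj E v u, v < u & forall w, adj E v w -> v < w -> u <= w].
Proof.
rewrite /next_up; case: pickP => // u' /and3P [h1 h2 /forallP h3] [<-].
split => // w a b; by move: (h3 w); rewrite a b.
Qed.

Lemma next_up_none {m} (E : {set {set 'I_m.+1}}) v :
  next_up E v = None -> forall w, adj E v w -> ~~ (v < w).
Proof.
rewrite /next_up; case: pickP => // H _ w a; apply/negP => b.
have P0 : (fun u : 'I_m.+1 => adj E v u && (v < u)) w by rewrite /= a b.
case: (@arg_minnP _ w (fun u : 'I_m.+1 => adj E v u && (v < u)) (fun u : 'I_m.+1 => nat_of_ord u) P0) => u /andP[a' b'] mn.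
move: (H u); rewrite a' b' /= => /negbT/negP; apply.
apply/forallP => w'; apply/implyP => /andP[c d]; apply: mn; by rewrite /= c d.
Qed.

Lemma next_up_eq {m} (E : {set {set 'I_m.+1}}) v u :
  adj E v u -> v < u -> (forall w, adj E v w -> v < w -> u <= w) ->
  next_up E v = Some u.
Proof.
move=> a b c; rewrite /next_up; case: pickP => [u' /and3P[a' b' /forallP c'] | H].
- congr Some; apply/val_inj/eqP; rewrite eqn_leq; apply/andP; split.
  + by move: (c' u); rewrite a b.
  + exact: c.
- move: (H u); rewrite a b /= => /negbT/negP H'; exfalso; apply: H'.
  apply/forallP => w; apply/implyP => /andP[]; exact: c.
Qed.

Lemma next_up_eqNone {m} (E : {set {set 'I_m.+1}}) v :
  (forall w, adj E v w -> ~~ (v < w)) -> next_up E v = None.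
Proof.
move=> H; rewrite /next_up; case: pickP => // u /and3P[a b _].
by move: (H u a); rewrite b.
Qed.

Fixpoint chain {m} (E : {set {set 'I_m.+1}}) (v : 'I_m.+1) (s : seq 'I_m.+1) : Prop :=
  match s with
  | [::] => next_up E v = None
  | u :: s' => next_up E v = Some u /\ chain E u s'
  end.

Lemma chain_upath {m} (E : {set {set 'I_m.+1}}) f (v : 'I_m.+1) :
  m - v < f -> chain E v (upath E f v).
Proof.
elim: f v => // f IH v lt /=; case E1: (next_up E v) => [u|] //=; split => //.
apply: IH; have [_ vu _] := next_up_some E1; have := ltn_ord u; lia.
Qed.

Lemma chain_uniq {m} (E : {set {set 'I_m.+1}}) v s1 s2 :
  chain E v s1 -> chain E v s2 -> s1 = s2.
Proof.
elim: s1 v s2 => [|u s1 IH] v [|u2 s2] //=.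
- by move=> H1 [H2 _]; rewrite H1 in H2.
- by move=> [H1 _] H2; rewrite H1 in H2.
- move=> [H1 C1] [H2 C2]; have eu : u = u2 by rewrite H1 in H2; case: H2.
  subst u2; by rewrite (IH _ _ C1 C2).
Qed.

Lemma chain_nth {m} (E : {set {set 'I_m.+1}}) v s :
  chain E v s <->
  (forall k, k < size s -> next_up E (nth v (v :: s) k) = Some (nth v s k))
  /\ next_up E (last v s) = None.
Proof.
elim: s v => [|u s IH] v /=; first by split => [H|[_ H]] //; split.
split => [[H /IH [H1 H2]] | [H1 H2]].
- split => // [[|k]] /= hk; first by rewrite H.
  rewrite (set_nth_default u v) /=; last by rewrite ltnW.
  by rewrite (set_nth_default u v hk); apply: H1.
- split; first exact: (H1 0).
  apply/IH; split => // k hk; move: (H1 k.+1 hk) => /=.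
  rewrite (set_nth_default u v) /=; last by rewrite ltnW.
  by rewrite (set_nth_default u v hk).
Qed.

Definition ps {m} (E : {set {set 'I_m.+1}}) : seq 'I_m.+1 := ord0 :: Lpath E ord0.
Definition vv {m} (E : {set {set 'I_m.+1}}) k : 'I_m.+1 := nth ord0 (ps E) k.
Definition ll {m} (E : {set {set 'I_m.+1}}) := size (Lpath E ord0).
Definition rho {m} (E : {set {set 'I_m.+1}}) := next (ps E).

Lemma chainL {m} (E : {set {set 'I_m.+1}}) : chain E ord0 (Lpath E ord0).
Proof. apply: chain_upath => /=; lia. Qed.

Lemma F1 {m} (E : {set {set 'I_m.+1}}) k : k < ll E -> next_up E (vv E k) = Some (vv E k.+1).
Proof. by move=> hk; have [H _] := proj1 (chain_nth _ _ _) (chainL E); apply: H. Qed.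

Lemma vv_last {m} (E : {set {set 'I_m.+1}}) : vv E (ll E) = last ord0 (Lpath E ord0).
Proof. exact: (nth_last ord0 (ord0 :: Lpath E ord0)). Qed.

Lemma F2 {m} (E : {set {set 'I_m.+1}}) : next_up E (vv E (ll E)) = None.
Proof. by have [_ H] := proj1 (chain_nth _ _ _) (chainL E); rewrite vv_last. Qed.

Lemma vv0 {m} (E : {set {set 'I_m.+1}}) : vv E 0 = ord0.
Proof. by []. Qed.

Lemma F3 {m} (E : {set {set 'I_m.+1}}) i j : i < j -> j <= ll E -> vv E i < vv E j.
Proof.
move=> ij; elim: j ij => // j IH; rewrite ltnS leq_eqVlt => /orP [/eqP <- | ij] hj.
- by have [_ h _] := next_up_some (F1 hj).
- have [_ h _] := next_up_some (F1 hj); apply: ltn_trans h; apply: IH => //; exact: ltnW.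
Qed.

Lemma F3lt {m} (E : {set {set 'I_m.+1}}) i j : i <= ll E -> j <= ll E ->
  (vv E i < vv E j) = (i < j).
Proof.
move=> hi hj; case: (ltnP i j) => h; first exact: F3.
rewrite leq_eqVlt in h; case/orP: h => [/eqP -> | h]; first by rewrite ltnn.
by apply/negbTE; rewrite -leqNgt ltnW // F3.
Qed.

Lemma F3le {m} (E : {set {set 'I_m.+1}}) i j : i <= ll E -> j <= ll E ->
  (vv E i <= vv E j) = (i <= j).
Proof. by move=> hi hj; rewrite leqNgt F3lt // -leqNgt. Qed.

Lemma ps_uniq {m} (E : {set {set 'I_m.+1}}) : uniq (ps E).
Proof.
apply/(uniqP ord0) => i j hi hj e.
have hi' : i <= ll E by rewrite -ltnS; exact: hi.
have hj' : j <= ll E by rewrite -ltnS; exact: hj.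
have e' : nat_of_ord (vv E i) = vv E j by rewrite /vv e.
by apply/eqP; rewrite eqn_leq -(F3le hi' hj') -(F3le hj' hi') e' !leqnn.
Qed.

Lemma F5 {m} (E : {set {set 'I_m.+1}}) q : q <= ll E ->
  rho E (vv E q) = nth ord0 (Lpath E ord0) q.
Proof.
move=> hq; rewrite /rho /vv next_nth mem_nth; last by rewrite /ps /= ltnS.
rewrite index_uniq //; try exact: ps_uniq; by rewrite /ps /= ltnS.
Qed.

Lemma F5S {m} (E : {set {set 'I_m.+1}}) q : q < ll E -> rho E (vv E q) = vv E q.+1.
Proof. by move=> hq; rewrite F5 // ltnW. Qed.

Lemma F5l {m} (E : {set {set 'I_m.+1}}) : rho E (vv E (ll E)) = ord0.
Proof. by rewrite F5 // nth_default. Qed.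

Lemma F6 {m} (E : {set {set 'I_m.+1}}) u : u \notin ps E -> rho E u = u.
Proof. by move=> h; rewrite /rho next_nth (negbTE h). Qed.

Lemma F7 {m} (E : {set {set 'I_m.+1}}) u : u \in ps E -> exists2 q, q <= ll E & u = vv E q.
Proof.
move=> h; exists (index u (ps E)); last by rewrite /vv nth_index.
by rewrite -ltnS; have := h; rewrite -index_mem.
Qed.

Lemma adjC {m} (E : {set {set 'I_m.+1}}) a b : adj E a b = adj E b a.
Proof. by rewrite /adj setUC. Qed.

Lemma keyK {m} (E : {set {set 'I_m.+1}}) i u : i <= ll E -> adj E (vv E i) u ->
  0 < rho E u -> vv E i < rho E u -> i < ll E /\ vv E i.+1 <= rho E u.
Proof.
move=> hi a p0 lt.
case: (boolP (u \in ps E)) => [/F7 [q hq eu] | nu].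
- subst u; move: p0 lt; rewrite leq_eqVlt in hq; case/orP: hq => [/eqP -> | hq].
  + by rewrite F5l.
  + rewrite F5S // => _; rewrite F3lt // => iq; split; first lia.
    by rewrite F3le; lia.
- move: lt; rewrite F6 // => lt; rewrite leq_eqVlt in hi; case/orP: hi => [/eqP ei | hi].
  + by subst i; move: (next_up_none (F2 E) a); rewrite lt.
  + by split => //; have [_ _ h] := next_up_some (F1 hi); apply: h.
Qed.

Definition rr {m} (i : 'I_m.+1) : 'I_m.+1 := inord (if nat_of_ord i == 0 then 0 else m.+1 - i).

Lemma rrE {m} (i : 'I_m.+1) : nat_of_ord (rr i) = if nat_of_ord i == 0 then 0 else m.+1 - i.
Proof. rewrite inordK //; have := ltn_ord i; case: ifP => /eqP; lia. Qed.

Lemma rrK {m} : involutive (@rr m).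
Proof.
move=> i; apply/val_inj => /=; rewrite !rrE; have := ltn_ord i.
have [->|h] := eqVneq (nat_of_ord i) 0 => //= hi; rewrite ifF; [lia | apply/eqP; lia].
Qed.

Lemma rr_inj {m} : injective (@rr m).
Proof. exact: inv_inj rrK. Qed.

Lemma rr0 {m} : @rr m ord0 = ord0.
Proof. by apply/val_inj => /=; rewrite rrE. Qed.

Lemma rrpos {m} (a : 'I_m.+1) : (0 < rr a) = (0 < a).
Proof. rewrite rrE; have := ltn_ord a; case: ifP => /eqP h; lia. Qed.

Lemma rrlt {m} (a b : 'I_m.+1) : 0 < a -> 0 < b -> (rr a < rr b) = (b < a).
Proof.
rewrite !rrE; have := ltn_ord a; have := ltn_ord b.
case: ifP => /eqP h1; case: ifP => /eqP h2; lia.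
Qed.

Lemma rrle {m} (a b : 'I_m.+1) : 0 < a -> 0 < b -> (rr a <= rr b) = (b <= a).
Proof. by move=> ha hb; rewrite leqNgt rrlt // -leqNgt. Qed.

Definition sg {m} (E : {set {set 'I_m.+1}}) (x : 'I_m.+1) : 'I_m.+1 := rr (rho E x).
Definition Phi {m} (E : {set {set 'I_m.+1}}) : {set {set 'I_m.+1}} :=
  [set [set sg E x | x in e] | e : {set 'I_m.+1} in E].

Lemma sg_inj {m} (E : {set {set 'I_m.+1}}) : injective (sg E).
Proof. apply: inj_comp rr_inj _; exact: can_inj (prev_next (ps_uniq E)). Qed.

Lemma adjPhi {m} (E : {set {set 'I_m.+1}}) a b : adj (Phi E) (sg E a) (sg E b) = adj E a b.
Proof.
rewrite /adj /Phi.
have -> : [set sg E a; sg E b] = [set sg E x | x in [set a; b]] by rewrite imsetU1 imset_set1.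
apply/imsetP/idP => [[e He /(imset_inj (@sg_inj _ E)) ->] // | H].
by exists [set a; b].
Qed.

Lemma connect_map (T : finType) (e e' : rel T) (h : T -> T) :
  (forall x y, e x y -> e' (h x) (h y)) ->
  forall x y, connect e x y -> connect e' (h x) (h y).
Proof.
move=> H x y /connectP [p pth ->]; elim: p x pth => [|a p IH] x /=.
- by move=> _; exact: connect0.
- move=> /andP [exa pth]; exact: connect_trans (connect1 (H _ _ exa)) (IH _ pth).
Qed.

Lemma tree_Phi {m} (E : {set {set 'I_m.+1}}) : is_tree E -> is_tree (Phi E).
Proof.
rewrite /is_tree => /andP [/andP [/forallP H1 H2] /forallP H3].
have si := @sg_inj _ E; have [g gK Kg] := injF_bij si.
apply/andP; split; first (apply/andP; split).
- apply/forallP => e; apply/implyP => /imsetP [e0 He0 ->]; rewrite card_imset //.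
  exact: (implyP (H1 e0) He0).
- by rewrite /Phi card_imset //; exact: imset_inj.
- apply/forallP => a; apply/forallP => b; rewrite -(Kg a) -(Kg b).
  apply: (connect_map (e := adj E)) => [x y|]; first by rewrite adjPhi.
  by move/forallP: (H3 (g a)) => /(_ (g b)).
Qed.

Lemma degPhi {m} (E : {set {set 'I_m.+1}}) a : deg (Phi E) (sg E a) = deg E a.
Proof.
have si := @sg_inj _ E; have [g gK Kg] := injF_bij si.
rewrite /deg -(card_imset [set u | adj E a u] si); apply: eq_card => u.
by rewrite inE -(Kg u) mem_imset // inE adjPhi.
Qed.

Lemma sgv {m} (E : {set {set 'I_m.+1}}) q : q <= ll E -> sg E (vv E q) = rr (nth ord0 (Lpath E ord0) q).
Proof. by move=> hq; rewrite /sg F5. Qed.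

Lemma wE {m} (E : {set {set 'I_m.+1}}) k : k <= ll E ->
  nth ord0 (ord0 :: map rr (rev (Lpath E ord0))) k = sg E (vv E (ll E - k)).
Proof.
move=> hk; rewrite sgv ?leq_subr //; case: k hk => [|k] hk /=.
- by rewrite subn0 nth_default // rr0.
- by rewrite (nth_map ord0) ?size_rev // nth_rev.
Qed.

Lemma vpos {m} (E : {set {set 'I_m.+1}}) i : 0 < i -> i <= ll E -> 0 < vv E i.
Proof. by move=> h hi; have := F3 h hi; rewrite vv0. Qed.

Lemma stepPhi {m} (E : {set {set 'I_m.+1}}) i : i < ll E ->
  next_up (Phi E) (sg E (vv E i.+1)) = Some (sg E (vv E i)).
Proof.
move=> hi; have si := @sg_inj _ E; have [g gK Kg] := injF_bij si.
have ev : sg E (vv E i) = rr (vv E i.+1) by rewrite /sg F5S.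
have p1 : 0 < vv E i.+1 by apply: vpos.
apply: next_up_eq.
- rewrite adjPhi adjC; by have [h _ _] := next_up_some (F1 hi).
- rewrite ev sgv //; rewrite leq_eqVlt in hi; case/orP: hi => [/eqP ei | hi].
  + rewrite nth_default; last by move: ei; rewrite /ll => <-.
    by rewrite rr0 rrpos.
  + have -> : nth ord0 (Lpath E ord0) i.+1 = vv E i.+2 by [].
    rewrite rrlt ?vpos ?F3lt //; exact: ltnW.
- move=> w; rewrite -(Kg w) adjPhi => A lt; set u := g w in A lt *.
  have pu : 0 < rho E u by rewrite -rrpos; move: lt; rewrite /sg; lia.
  rewrite ev /sg; case: (ltnP (vv E i.+1) (rho E u)) => h.
  + have [h1 h2] := keyK hi A pu h; move: lt; rewrite /sg F5S //.
    by rewrite ltnNge rrle ?vpos // h2.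
  + by rewrite rrle.
Qed.

Lemma endPhi {m} (E : {set {set 'I_m.+1}}) : next_up (Phi E) (sg E (vv E 0)) = None.
Proof.
have si := @sg_inj _ E; have [g gK Kg] := injF_bij si.
apply: next_up_eqNone => w; rewrite -(Kg w) adjPhi => A; apply/negP => lt.
set u := g w in A lt.
have pu : 0 < rho E u by rewrite -rrpos; move: lt; rewrite /sg; lia.
have [h1 h2] := keyK (leq0n _) A pu pu.
by move: lt; rewrite /sg F5S // ltnNge rrle ?vpos // h2.
Qed.

Lemma LpathPhi {m} (E : {set {set 'I_m.+1}}) :
  Lpath (Phi E) ord0 = map rr (rev (Lpath E ord0)).
Proof.
apply: (chain_uniq (chainL (Phi E))); apply/chain_nth; split.
- move=> k; rewrite size_map size_rev => hk.
  have -> : nth ord0 [seq rr i | i <- rev (Lpath E ord0)] k =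
            nth ord0 (ord0 :: map rr (rev (Lpath E ord0))) k.+1 by [].
  rewrite !wE //; last exact: ltnW.
  have [i ei] : exists i, ll E - k = i.+1 by exists (ll E - k).-1; rewrite /ll; lia.
  have -> : ll E - k.+1 = i by rewrite /ll in ei *; lia.
  rewrite ei; apply: stepPhi; rewrite /ll in ei *; lia.
- have -> : last ord0 [seq rr i | i <- rev (Lpath E ord0)] =
            nth ord0 (ord0 :: map rr (rev (Lpath E ord0))) (ll E).
    by rewrite /ll -(size_rev (Lpath E ord0)) -(size_map rr); symmetry; exact: (nth_last ord0 (ord0 :: _)).
  by rewrite wE // subnn endPhi.
Qed.

Lemma llPhi {m} (E : {set {set 'I_m.+1}}) : ll (Phi E) = ll E.
Proof. by rewrite /ll LpathPhi size_map size_rev. Qed.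

Lemma vvPhi {m} (E : {set {set 'I_m.+1}}) k : k <= ll E ->
  vv (Phi E) k = sg E (vv E (ll E - k)).
Proof. by move=> hk; rewrite -wE // -LpathPhi. Qed.

Lemma sgK {m} (E : {set {set 'I_m.+1}}) x : sg (Phi E) (sg E x) = x.
Proof.
case: (boolP (x \in ps E)) => [/F7 [q hq ->] | nx].
- have e1 := vvPhi (leq_subr q (ll E)); rewrite subKn // in e1; rewrite -e1.
  rewrite sgv ?llPhi ?leq_subr //.
  case: q hq e1 => [|q] hq e1.
  + by rewrite subn0 nth_default ?rr0 // -/(ll (Phi E)) llPhi.
  + have -> : nth ord0 (Lpath (Phi E) ord0) (ll E - q.+1) = vv (Phi E) (ll E - q.+1).+1 by [].
    have -> : (ll E - q.+1).+1 = ll E - q by lia.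
    by rewrite vvPhi ?leq_subr // subKn ?(ltnW hq) // /sg F5S // rrK.
- have nx' : rr x \notin ps (Phi E).
    rewrite /ps LpathPhi inE mem_map ?mem_rev; last exact: rr_inj.
    have -> : (rr x == ord0) = (x == ord0) by rewrite -[in LHS]rr0 (inj_eq rr_inj).
    by move: nx; rewrite /ps inE.
  by rewrite /sg (F6 nx) (F6 nx') rrK.
Qed.

Lemma PhiK {m} (E : {set {set 'I_m.+1}}) : Phi (Phi E) = E.
Proof.
have -> : Phi (Phi E) = [set [set sg (Phi E) x | x in e] | e : {set 'I_m.+1} in
             [set [set sg E x | x in e] | e : {set 'I_m.+1} in E]] by [].
rewrite -imset_comp -[RHS]imset_id; apply: eq_imset => e /=.
rewrite -imset_comp -[RHS]imset_id; apply: eq_imset => x /=; exact: sgK.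
Qed.

Lemma treeE {m} (E : {set {set 'I_m.+1}}) : is_tree (Phi E) = is_tree E.
Proof.
apply/idP/idP => [h|]; last exact: tree_Phi.
by rewrite -(PhiK E); apply: tree_Phi.
Qed.

Lemma lastPhi {m} (E : {set {set 'I_m.+1}}) : last ord0 (Lpath (Phi E) ord0) = sg E ord0.
Proof. by rewrite -vv_last llPhi vvPhi // subnn. Qed.

Theorem proposition4p1 (n : nat) (hn : (2 <= n)%N) (R : comNzRingType) (x y z : R) :
  G n x y z = G n y x z.
Proof.
case: n hn => // m _ /=; rewrite /Gaux [RHS](reindex_inj (can_inj (@PhiK m))).
apply: eq_big => E; first by rewrite treeE.
move=> _.
have e0 : sg E (vv E (ll E)) = ord0 by rewrite /sg F5l rr0.
have d0 : deg (Phi E) (sg E (vv E (ll E))) = deg E (last ord0 (Lpath E ord0))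
  by rewrite degPhi vv_last.
rewrite e0 in d0.
rewrite lastPhi degPhi d0 LpathPhi size_map size_rev.
congr (_ * _)%R; exact: GRing.mulrC.
Qed.
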